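(* Let $L$ be an $n$-dimensional nilpotent Lie algebra. If $\dim\mathcal{M}^{(2)}(L)=\frac13 n(n-1)(n+1)$, then $L\cong A(n)$.
   Context: All Lie algebras are over a fixed field. For a Lie algebra $L$ with free presentation $L\cong F/R$, the $2$-nilpotent multiplier is $\mathcal{M}^{(2)}(L)=(R\cap F^{3})/[[R,F],F]$, where $F^3=[[F,F],F]$. $A(n)$ denotes the abelian Lie algebra of dimension $n$. *)

(* Defs.v *)
From HB Require Import structures.
From mathcomp Require Import all_boot all_order all_algebra.
Set Implicit Arguments. Unset Strict Implicit. Unset Printing Implicit Defensive.
Import GRing.Theory.
Local Open Scope ring_scope.

Section Lie.
Variable K : fieldType.

Definition is_lie (V : lmodType K) (br : V -> V -> V) : Prop :=
  [/\ (forall (a : K) (x y z : V), br (a *: x + y) z = a *: br x z + br y z),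
      (forall (a : K) (x y z : V), br x (a *: y + z) = a *: br x y + br x z),
      (forall x : V, br x x = 0) &
      (forall x y z : V, br x (br y z) + br y (br z x) + br z (br x y) = 0)].

Definition lie_hom (V W : lmodType K) (brV : V -> V -> V) (brW : W -> W -> W)
  (f : V -> W) : Prop :=
  (forall (a : K) (x y : V), f (a *: x + y) = a *: f x + f y) /\
  (forall x y : V, f (brV x y) = brW (f x) (f y)).

Inductive brspan (V : lmodType K) (br : V -> V -> V) (A B : V -> Prop) : V -> Prop :=
  | brspan0 : brspan br A B 0
  | brspan_br x y : A x -> B y -> brspan br A B (br x y)
  | brspan_add u v : brspan br A B u -> brspan br A B v -> brspan br A B (u + v)
  | brspan_scale (a : K) u : brspan br A B u -> brspan br A B (a *: u).

(* lower central series: lcs br k = V^(k+1); lcs 0 = V, lcs (k+1) = [lcs k, V] *)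
Fixpoint lcs (V : lmodType K) (br : V -> V -> V) (k : nat) : V -> Prop :=
  match k with
  | O => fun _ => True
  | S k' => brspan br (lcs br k') (fun _ => True)
  end.

Definition nilpotent_lie (V : lmodType K) (br : V -> V -> V) : Prop :=
  exists c : nat, forall x : V, lcs br c x -> x = 0.

Definition is_free_lie (X : Type) (F : lmodType K) (brF : F -> F -> F)
  (i : X -> F) : Prop :=
  forall (M : lmodType K) (brM : M -> M -> M), is_lie brM ->
  forall f : X -> M,
    exists g : F -> M,
      [/\ lie_hom brF brM g, (forall x, g (i x) = f x) &
          (forall g' : F -> M, lie_hom brF brM g' -> (forall x, g' (i x) = f x) ->
             forall v, g' v = g v)].

Definition quot_dim (V : lmodType K) (A B : V -> Prop) (d : nat) : Prop :=
  exists e : 'I_d -> V,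
    [/\ (forall j, A (e j)),
        (forall v, A v -> exists c : 'I_d -> K, B (v - \sum_(j < d) c j *: e j)) &
        (forall c : 'I_d -> K, B (\sum_(j < d) c j *: e j) -> forall j, c j = 0)].

(* For a free presentation pi : F -> L with R = ker pi:
   numerator R cap F^3 and denominator [[R,F],F] of M^(2)(L). *)
Definition M2_num (F L : lmodType K) (brF : F -> F -> F) (pi : F -> L) : F -> Prop :=
  fun v => pi v = 0 /\ lcs brF 2 v.
Definition M2_den (F L : lmodType K) (brF : F -> F -> F) (pi : F -> L) : F -> Prop :=
  brspan brF (brspan brF (fun v => pi v = 0) (fun _ => True)) (fun _ => True).

Definition two_nilpotent_multiplier_dim (F L : lmodType K) (brF : F -> F -> F)
  (pi : F -> L) (d : nat) : Prop :=
  quot_dim (M2_num brF pi) (M2_den brF pi) d.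

Definition abelian_br (n : nat) : 'rV[K]_n -> 'rV[K]_n -> 'rV[K]_n := fun _ _ => 0.

Definition lie_iso (V W : lmodType K) (brV : V -> V -> V) (brW : W -> W -> W) : Prop :=
  exists f : V -> W, lie_hom brV brW f /\ bijective f.
End Lie.

(* Main.v *)
Require Import Defs.
From HB Require Import structures.
From mathcomp Require Import all_boot all_order all_algebra zify.
Set Implicit Arguments. Unset Strict Implicit. Unset Printing Implicit Defensive.
Import GRing.Theory.
Local Open Scope ring_scope.

Section LieGen.
Variables (K : fieldType) (V : lmodType K) (br : V -> V -> V).
Hypothesis hL : is_lie br.

Lemma br0l z : br 0 z = 0.
Proof. case: hL => hl _ _ _. have := hl (-1) z z z. by rewrite !scaleN1r !addNr. Qed.
Lemma br0r z : br z 0 = 0.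
Proof. case: hL => _ hr _ _. by have := hr (-1) z z z; rewrite !scaleN1r !addNr. Qed.
Lemma brDl x y z : br (x + y) z = br x z + br y z.
Proof. case: hL => hl _ _ _. by have := hl 1 x y z; rewrite !scale1r. Qed.
Lemma brDr x y z : br z (x + y) = br z x + br z y.
Proof. case: hL => _ hr _ _. by have := hr 1 z x y; rewrite !scale1r. Qed.
Lemma brZl a x z : br (a *: x) z = a *: br x z.
Proof. case: hL => hl _ _ _. by have := hl a x 0 z; rewrite addr0 br0l addr0. Qed.
Lemma brZr a x z : br z (a *: x) = a *: br z x.
Proof. case: hL => _ hr _ _. by have := hr a z x 0; rewrite addr0 br0r addr0. Qed.
Lemma brLl a x y z : br (a *: x + y) z = a *: br x z + br y z.
Proof. by rewrite brDl brZl. Qed.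
Lemma brLr a x y z : br z (a *: x + y) = a *: br z x + br z y.
Proof. by rewrite brDr brZr. Qed.
Lemma brxx x : br x x = 0.
Proof. by case: hL. Qed.
Lemma brC x y : br x y = - br y x.
Proof.
apply/eqP; rewrite -addr_eq0; apply/eqP.
have := brxx (x + y); rewrite brDl !brDr !brxx add0r addr0.
by move=> ->.
Qed.
Lemma brNl x z : br (- x) z = - br x z.
Proof. by rewrite -scaleN1r brZl scaleN1r. Qed.
Lemma brNr x z : br z (- x) = - br z x.
Proof. by rewrite -scaleN1r brZr scaleN1r. Qed.
Lemma jacL x y z : br (br x y) z = br (br z y) x - br (br z x) y.
Proof.
case: hL => _ _ _ hj. move: (hj x y z).
rewrite (brC x (br y z)) (brC y (br z x)) (brC z (br x y)) (brC y z) brNl opprK.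
by move/eqP; rewrite subr_eq0 => /eqP ->.
Qed.
Lemma brsumL (I : finType) (c : I -> K) (u : I -> V) z :
  br (\sum_i c i *: u i) z = \sum_i c i *: br (u i) z.
Proof.
apply: (big_rec2 (fun a b => br a z = b)); first exact: br0l.
by move=> i y1 y2 _ <-; rewrite brLl.
Qed.
Lemma brsumR (I : finType) (c : I -> K) (u : I -> V) z :
  br z (\sum_i c i *: u i) = \sum_i c i *: br z (u i).
Proof.
apply: (big_rec2 (fun a b => br z a = b)); first exact: br0r.
by move=> i y1 y2 _ <-; rewrite brLr.
Qed.
End LieGen.
Lemma dep (K : fieldType) (V : lmodType K) (D : V -> Prop) (D0 : D 0)
  (DL : forall a u v, D u -> D v -> D (a *: u + v)) p m
  (s : 'I_p -> V) (v : 'I_m -> V) : (p < m)%N ->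
  (forall j, exists a : 'I_p -> K, D (v j - \sum_k a k *: s k)) ->
  exists c : 'I_m -> K, (exists j, c j != 0) /\ D (\sum_j c j *: v j).
Proof.
move=> hpm hv; have [a ha] := fin_all_exists hv.
pose A : 'M[K]_(m, p) := \matrix_(j, k) a j k.
have hA : forall j k, A j k = a j k by move=> j k; rewrite /A mxE.
have hk : kermx A != 0.
  rewrite -mxrank_eq0 mxrank_ker subn_eq0 -ltnNge.
  exact: leq_ltn_trans (rank_leq_col A) hpm.
have [i hi] : exists i, row i (kermx A) != 0.
  case/boolP: [exists i, row i (kermx A) != 0] => [/existsP //| /existsPn hn].
  case/eqP: hk; apply/row_matrixP => i; rewrite row0.
  by move/negPn/eqP: (hn i).
set u := row i (kermx A) in hi.
have hu : u *m A = 0 by rewrite /u -row_mul mulmx_ker row0.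
exists (fun j => u 0 j); split.
  case/boolP: [exists j, u 0 j != 0] => [/existsP //| /existsPn hn].
  suff : u == 0 by rewrite (negbTE hi).
  apply/eqP/matrixP => r j; rewrite (ord1 r).
  move: (hn j); rewrite negbK => /eqP ->; by rewrite mxE.
pose S j := \sum_k a j k *: s k.
have e : \sum_j u 0 j *: v j = \sum_j u 0 j *: (v j - S j) + \sum_j u 0 j *: S j.
  by rewrite -big_split; apply: eq_bigr => j _ /=; rewrite -scalerDr subrK.
have e2 : \sum_j u 0 j *: S j = 0.
  rewrite /S; under eq_bigr => j0 _ do rewrite scaler_sumr.
  rewrite exchange_big /=; apply: big1 => k _.
  under eq_bigr => j0 _ do rewrite scalerA.
  rewrite -scaler_suml.
  have -> : \sum_j u 0 j * a j k = (u *m A) 0 k.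
    rewrite !mxE; apply: eq_bigr => j1 _; by rewrite hA.
  by rewrite hu mxE scale0r.
rewrite e e2 addr0.
apply: (big_ind D D0) => [x y hx hy|j _].
  by have := DL 1 x y hx hy; rewrite scale1r.
by have := DL (u 0 j) _ 0 (ha j) D0; rewrite addr0.
Qed.

Definition hall n (t : 'I_n * 'I_n * 'I_n) : bool := (t.1.1 < t.1.2)%N && (t.1.1 <= t.2)%N.

Local Close Scope ring_scope.
Lemma cnt_le n i : \sum_(k < n) (i <= k : nat) = n - i.
Proof.
rewrite -(big_mkord xpredT (fun k => (i <= k : nat))).
elim: n => [|n IH]; first by rewrite big_geq.
rewrite big_nat_recr //= IH; case: leqP => h; lia.
Qed.
Lemma cnt_lt n i : \sum_(k < n) (i < k : nat) = n - i.+1.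
Proof. exact: cnt_le. Qed.

Lemma sum_tri n : (3 * \sum_(i < n) (n - i.+1) * (n - i) = n * (n - 1) * (n + 1))%N.
Proof.
elim: n => [|n IH]; first by rewrite big_ord0.
rewrite big_ord_recl /=.
have -> : \sum_(i < n) (n.+1 - (lift ord0 i).+1) * (n.+1 - lift ord0 i) =
          \sum_(i < n) (n - i.+1) * (n - i) by apply: eq_bigr => i _; rewrite lift0.
rewrite mulnDr IH; nia.
Qed.

Lemma card_hall n : (3 * #|@hall n| = n * (n - 1) * (n + 1))%N.
Proof.
rewrite -sum_tri -sum1_card big_mkcond /=.
rewrite -(pair_big xpredT xpredT (fun ij k => if hall (ij, k) then 1 else 0)%N) /=.
rewrite -(pair_big xpredT xpredT (fun i j => \sum_k if hall (i, j, k) then 1 else 0)%N) /=.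
congr (3 * _)%N; apply: eq_bigr => i _.
have -> : (\sum_j \sum_k (if hall (i, j, k) then 1 else 0) =
   \sum_(j : 'I_n) (i < j : nat) * \sum_(k : 'I_n) (i <= k : nat))%N.
  apply: eq_bigr => j _; rewrite big_distrr /=; apply: eq_bigr => k _.
  by rewrite /hall /=; case: (i < j)%N; case: (i <= k)%N.
by rewrite -big_distrl /= !cnt_le.
Qed.

Local Open Scope ring_scope.
Section Main.
Variables (K : fieldType) (F L : lmodType K) (brF : F -> F -> F) (brL : L -> L -> L)
  (pi : F -> L).
Hypotheses (hF : is_lie brF) (hL : is_lie brL) (hpi : lie_hom brF brL pi).

Lemma piL a u v : pi (a *: u + v) = a *: pi u + pi v.
Proof. by case: hpi. Qed.
Lemma pibr u v : pi (brF u v) = brL (pi u) (pi v).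
Proof. by case: hpi. Qed.
Lemma pi0 : pi 0 = 0.
Proof. by have := piL (-1) 0 0; rewrite scaler0 addr0 scaleN1r addNr. Qed.
Lemma piD u v : pi (u + v) = pi u + pi v.
Proof. by have := piL 1 u v; rewrite !scale1r. Qed.
Lemma piZ a u : pi (a *: u) = a *: pi u.
Proof. by have := piL a u 0; rewrite !addr0 pi0 addr0. Qed.
Lemma piN u : pi (- u) = - pi u.
Proof. by rewrite -scaleN1r piZ scaleN1r. Qed.
Lemma piB u v : pi (u - v) = pi u - pi v.
Proof. by rewrite piD piN. Qed.
Lemma pisum (I : finType) (c : I -> K) (u : I -> F) :
  pi (\sum_i c i *: u i) = \sum_i c i *: pi (u i).
Proof.
apply: (big_rec2 (fun a b => pi a = b)); first exact: pi0.
by move=> i y1 y2 _ <-; rewrite piL.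
Qed.

Definition Rk (v : F) := pi v = 0.
Let D := M2_den brF pi.

Lemma RF_R v : brspan brF Rk (fun _ => True) v -> pi v = 0.
Proof.
elim=> [|x y hx _|u w _ hu _ hw|a u _ hu]; first exact: pi0.
- by rewrite pibr hx br0l.
- by rewrite piD hu hw addr0.
- by rewrite piZ hu scaler0.
Qed.

Lemma D_R v : D v -> pi v = 0.
Proof.
elim=> [|x y hx _|u w _ hu _ hw|a u _ hu]; first exact: pi0.
- by rewrite pibr (RF_R hx) br0l.
- by rewrite piD hu hw addr0.
- by rewrite piZ hu scaler0.
Qed.

Lemma D0 : D 0. Proof. exact: brspan0. Qed.
Lemma DL a u v : D u -> D v -> D (a *: u + v).
Proof. by move=> hu hv; apply: brspan_add => //; apply: brspan_scale. Qed.
Lemma DB u v : D u -> D v -> D (u - v).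
Proof. by move=> hu hv; rewrite addrC -scaleN1r; apply: DL. Qed.
Lemma DN u : D u -> D (- u).
Proof. by move=> hu; rewrite -scaleN1r -[_ *: u]addr0; apply: DL => //; apply: D0. Qed.

Lemma D2 r f g : Rk r -> D (brF (brF r f) g).
Proof. by move=> hr; apply: brspan_br => //; apply: brspan_br. Qed.
Lemma D3 r f g : Rk r -> D (brF (brF f r) g).
Proof.
move=> hr; apply: brspan_br => //; rewrite (brC hF) -scaleN1r.
by apply: brspan_scale; apply: brspan_br.
Qed.
Lemma D4 r f g : Rk r -> D (brF (brF f g) r).
Proof. by move=> hr; rewrite (jacL hF); apply: DB; apply: D2. Qed.
Lemma DE r f g : Rk r -> D (brF r (brF f g)).
Proof. by move=> hr; rewrite (brC hF); apply: DN; apply: D4. Qed.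


Section Span.
Variables (n : nat) (x : 'I_n -> F).
Hypothesis hx : forall f, exists c : 'I_n -> K, Rk (f - \sum_i c i *: x i).
Variable P : pred ('I_n * 'I_n * 'I_n).
Definition s3 (t : 'I_n * 'I_n * 'I_n) := brF (brF (x t.1.1) (x t.1.2)) (x t.2).
Hypothesis hP : forall t, hall t -> ~~ P t -> D (s3 t).
Definition sK (k : 'I_#|P|) := s3 (enum_val k).
Definition Sp v := exists a : 'I_#|P| -> K, D (v - \sum_k a k *: sK k).

Lemma SpL a u v : Sp u -> Sp v -> Sp (a *: u + v).
Proof.
move=> [au hu] [av hv]; exists (fun k => a * au k + av k).
have -> : \sum_k (a * au k + av k) *: sK k =
   a *: (\sum_k au k *: sK k) + \sum_k av k *: sK k.
  by rewrite scaler_sumr -big_split; apply: eq_bigr => k _ /=; rewrite scalerDl scalerA.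
by rewrite opprD addrACA -scalerBr; apply: DL.
Qed.
Lemma D_Sp v : D v -> Sp v.
Proof.
by move=> hv; exists (fun _ => 0); rewrite big1 ?subr0 // => k _; rewrite scale0r.
Qed.
Lemma Sp0 : Sp 0. Proof. exact: D_Sp D0. Qed.
Lemma SpD u v : Sp u -> Sp v -> Sp (u + v).
Proof. by move=> hu hv; have := SpL 1 hu hv; rewrite scale1r. Qed.
Lemma SpZ a u : Sp u -> Sp (a *: u).
Proof. by move=> hu; have := SpL a hu Sp0; rewrite addr0. Qed.
Lemma SpN u : Sp u -> Sp (- u).
Proof. by move=> hu; rewrite -scaleN1r; apply: SpZ. Qed.
Lemma SpB u v : Sp u -> Sp v -> Sp (u - v).
Proof. by move=> hu hv; apply: SpD => //; apply: SpN. Qed.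
Lemma Sp_sK k : Sp (sK k).
Proof.
exists (fun k' => (k' == k)%:R).
rewrite (bigD1 k) //= eqxx scale1r big1 ?addr0 => [|k' /negbTE -> ]; last by rewrite scale0r.
by rewrite subrr; apply: D0.
Qed.
Lemma hallSp t : hall t -> Sp (s3 t).
Proof.
move=> ht; case Pt: (P t); last exact: D_Sp (hP ht (negbT Pt)).
have tP : t \in P by [].
by have := Sp_sK (enum_rank_in tP t); rewrite /sK (enum_rankK_in tP tP).
Qed.

Lemma S1 a b c : Sp (brF (brF (x a) (x b)) (x c)).
Proof.
have H (a' b' c' : 'I_n) : (a' < b')%N -> Sp (brF (brF (x a') (x b')) (x c')).
  move=> ab; case: (leqP a' c') => ac.
    by apply: (hallSp (t := (a', b', c'))); rewrite /hall /= ab ac.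
  rewrite (jacL hF); apply: SpB.
    by apply: (hallSp (t := (c', b', a'))); rewrite /hall /= (ltn_trans ac ab) ltnW.
  by apply: (hallSp (t := (c', a', b'))); rewrite /hall /= ac ltnW // (ltn_trans ac ab).
case: (ltngtP a b) => [ab|ba|eab]; first exact: H.
  by rewrite (brC hF (x a)) (brNl hF); apply: SpN; apply: H.
by rewrite (ord_inj eab) (brxx hF) (br0l hF); apply: Sp0.
Qed.

Lemma span_ind (Q : F -> Prop) : Q 0 -> (forall a u v, Q u -> Q v -> Q (a *: u + v)) ->
  (forall r, Rk r -> Q r) -> (forall i, Q (x i)) -> forall f, Q f.
Proof.
move=> Q0 QL QR Qx f; have [c hc] := hx f.
have hS : Q (\sum_i c i *: x i).
  apply: (big_ind Q Q0) => [u v hu hv|i _].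
    by have := QL 1 _ _ hu hv; rewrite scale1r.
  by have := QL (c i) _ _ (Qx i) Q0; rewrite addr0.
by have := QL 1 _ _ (QR _ hc) hS; rewrite scale1r subrK.
Qed.

Lemma S2 f g h : Sp (brF (brF f g) h).
Proof.
move: f g h; apply: span_ind => [g h|a u v hu hv g h|r hr g h|i].
- by rewrite !(br0l hF); apply: Sp0.
- by rewrite !(brLl hF); apply: SpL.
- by apply: D_Sp; apply: D2.
apply: span_ind => [h|a u v hu hv h|r hr h|j].
- by rewrite !(br0r hF) (br0l hF); apply: Sp0.
- by rewrite (brLr hF) (brLl hF); apply: SpL.
- by apply: D_Sp; apply: D3.
apply: span_ind => [|a u v hu hv|r hr|k].
- by rewrite (br0r hF); apply: Sp0.
- by rewrite (brLr hF); apply: SpL.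
- by apply: D_Sp; apply: D4.
exact: S1.
Qed.

Lemma S3 v : lcs brF 2 v -> Sp v.
Proof.
elim=> [|u y hu _|u w _ hu _ hw|a u _ hu]; first exact: Sp0.
- elim: hu y => [|f g _ _|u1 u2 _ h1 _ h2|a u1 _ h1] y.
  + by rewrite (br0l hF); apply: Sp0.
  + exact: S2.
  + by rewrite (brDl hF); apply: SpD.
  + by rewrite (brZl hF); apply: SpZ.
- exact: SpD.
- exact: SpZ.
Qed.
End Span.

Lemma caseA n (x : 'I_n -> F)
  (hx : forall f, exists c : 'I_n -> K, Rk (f - \sum_i c i *: x i))
  (hdim : two_nilpotent_multiplier_dim brF pi ((n * (n - 1) * (n + 1)) %/ 3)%N)
  (w : F) (hw3 : lcs brF 2 w) (hw : pi w != 0) : False.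
Proof.
move: hdim; rewrite -card_hall mulKn //; set N := #|_|.
case=> e [he1 _ he3].
pose v (j : 'I_N.+1) := if unlift ord_max j is Some k then e k else w.
have hv : forall j, v (widen_ord (leqnSn N) j) = e j.
  move=> j; rewrite /v; have -> : widen_ord (leqnSn N) j = lift ord_max j.
    by apply: val_inj; rewrite /= /bump leqNgt ltn_ord.
  by rewrite liftK.
have hvm : v ord_max = w by rewrite /v unlift_none.
have [c [[j hj] hD]] := @dep K F D D0 (@DL) #|@hall n| N.+1 (@sK n x (@hall n)) v (ltnSn _)
  (fun j => @S3 n x hx (@hall n) (fun t h1 h2 => False_ind _ ((negP h2) h1)) (v j)
     (match unlift ord_max j as o return lcs brF 2 (if o is Some k then e k else w) with
      | Some k => (he1 k).2 | None => hw3 end)).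
move: hD; rewrite big_ord_recr /= hvm.
under eq_bigr => k _ do rewrite hv.
move=> hD.
have hcm : c ord_max = 0.
  have := D_R hD; rewrite piD pisum big1 ?add0r => [|k _]; last by rewrite (he1 k).1 scaler0.
  by rewrite piZ => /eqP; rewrite scaler_eq0 (negbTE hw) orbF => /eqP.
move: hD; rewrite hcm scale0r addr0 => /he3 hz.
move: hj; case: (unliftP ord_max j) => [k ->|->]; last by rewrite hcm eqxx.
have -> : lift ord_max k = widen_ord (leqnSn N) k by apply: val_inj; rewrite /= /bump leqNgt ltn_ord.
by rewrite hz eqxx.
Qed.

Lemma caseB n (x : 'I_n -> F)
  (hx : forall f, exists c : 'I_n -> K, Rk (f - \sum_i c i *: x i))
  (hdim : two_nilpotent_multiplier_dim brF pi ((n * (n - 1) * (n + 1)) %/ 3)%N)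
  (p : 'I_n) (al ga : F) (hxp : x p = brF al ga)
  (hB : forall a b c : L, brL (brL a b) c = 0) (n2 : (1 < n)%N) : False.
Proof.
move: hdim; rewrite -card_hall mulKn //; set N := #|_|.
case=> e [he1 _ he3].
pose sp (t : 'I_n * 'I_n * 'I_n) := ((t.1.2 == p) && (t.2 == p)) || ((t.1.1 == p) && (t.2 == p)).
pose P := [pred t | hall t && ~~ sp t].
have hP : forall t, hall t -> ~~ P t -> D (s3 x t).
  move=> [[i j] k] ht; rewrite /P inE ht /= negbK /sp /= /s3 /=.
  case/orP => /andP [/eqP -> /eqP ->]; rewrite hxp; apply: DE.
    by rewrite /Rk pibr pibr (brC hL) hB oppr0.
  by rewrite /Rk pibr pibr hB.
have hcard : (#|P| < N)%N.
  apply: proper_card; apply/properP; split.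
    by apply/subsetP => t; rewrite !inE => /andP [].
  have h0 : (0 < n)%N by apply: ltn_trans n2.
  pose i0 : 'I_n := Ordinal h0; pose i1 : 'I_n := Ordinal n2.
  case: (eqVneq (p : nat) 0) => hp.
    exists (i0, i1, i0); first by rewrite unfold_in /hall.
    have e0 : i0 == p by apply/eqP/val_inj; rewrite /= hp.
    by rewrite !inE /hall /= negbK /sp /= e0 orbT.
  exists (i0, p, p); first by rewrite unfold_in /hall /= lt0n hp.
  by rewrite !inE /= /sp /= !eqxx andbF.
have [c [[j hj] hD]] := @dep K F D D0 (@DL) #|P| N (@sK n x P) e hcard
  (fun j => @S3 n x hx P hP (e j) (he1 j).2).
by move: hj; rewrite (he3 _ hD j) eqxx.
Qed.

Lemma lift_hx n (x : 'I_n -> F) (y : 'I_n -> L) (hxy : forall i, pi (x i) = y i)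
  (hy : forall v, exists c : 'I_n -> K, v = \sum_i c i *: y i) :
  forall f, exists c : 'I_n -> K, Rk (f - \sum_i c i *: x i).
Proof.
move=> f; have [c hc] := hy (pi f); exists c.
rewrite /Rk piB pisum hc.
have -> : \sum_i c i *: pi (x i) = \sum_i c i *: y i by apply: eq_bigr => i _; rewrite hxy.
exact: subrr.
Qed.
End Main.

Lemma exch (K : fieldType) (V : lmodType K) n (y : 'I_n -> V)
  (hy : forall v, exists c : 'I_n -> K, v = \sum_i c i *: y i) (b : V) :
  b != 0 -> exists y' : 'I_n -> V,
    (forall v, exists c : 'I_n -> K, v = \sum_i c i *: y' i) /\ exists p, y' p = b.
Proof.
move=> hb; have [be hbe] := hy b.
have [p hp] : exists p, be p != 0.
  case/boolP: [exists p, be p != 0] => [/existsP //| /existsPn hn].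
  suff : b == 0 by rewrite (negbTE hb).
  rewrite hbe big1 // => i _; move: (hn i); rewrite negbK => /eqP ->; exact: scale0r.
exists (fun i => if i == p then b else y i); split; last by exists p; rewrite eqxx.
move=> v; have [c hc] := hy v.
exists (fun i => if i == p then c p / be p else c i - c p / be p * be i).
rewrite (bigD1 p) //= eqxx.
under eq_bigr => i /negbTE hi do rewrite hi.
rewrite hc hbe (bigD1 p) //= (bigD1 p (P := xpredT)) //=.
have -> : \sum_(i < n | i != p) (c i - c p / be p * be i) *: y i =
   \sum_(i < n | i != p) c i *: y i - c p / be p *: \sum_(i < n | i != p) be i *: y i.
  rewrite scaler_sumr -sumrB; apply: eq_bigr => i _.
  by rewrite scalerBl scalerA.
by rewrite scalerDr scalerA divfK // addrACA subrr addr0.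
Qed.

From Stdlib Require Classical_Prop.

Theorem corollary2p15 (K : fieldType) (n : nat) (L : vectType K)
  (brL : L -> L -> L)
  (X : Type) (F : lmodType K) (brF : F -> F -> F) (i : X -> F) (pi : F -> L) :
  is_lie brL -> \dim (fullv : {vspace L}) = n -> nilpotent_lie brL ->
  is_lie brF -> is_free_lie brF i -> lie_hom brF brL pi -> (forall y : L, exists x : F, pi x = y) ->
  two_nilpotent_multiplier_dim brF pi ((n * (n - 1) * (n + 1)) %/ 3)%N ->
  lie_iso brL (@abelian_br K n).
Proof.
move=> hL hdim _ hF _ hpi hsurj hM; subst n.
pose y : 'I_(\dim (fullv : {vspace L})) -> L := fun j => (vbasis (fullv : {vspace L}))`_j.
have hy : forall v, exists c : _ -> K, v = \sum_j c j *: y j.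
  by move=> v; exists (fun j => coord (vbasis fullv) j v); exact: coord_vbasis (memvf v).
case: (Classical_Prop.classic (forall a b : L, brL a b = 0)) => [hab|hnab].
  exists (passmx.rVof (vbasis (fullv : {vspace L}))); split; last first.
    exists (passmx.vecof (vbasis (fullv : {vspace L}))).
      exact: (passmx.rVofK (vbasisP fullv)).
    exact: (passmx.vecofK (vbasisP fullv)).
  split=> [a u v|u v]; first exact: passmx.rVof_linear.
  by rewrite hab /abelian_br; apply/rowP => k; rewrite !mxE linear0.
exfalso.
have [a [c hac]] : exists a c, brL a c != 0.
  case: (Classical_Prop.classic (exists a c, brL a c != 0)) => // hn.
  exfalso; apply: hnab => a2 c2; apply/eqP; apply/negPn/negP => h2; apply: hn; exists a2, c2; exact: h2.
have [x0 hx0] := fin_all_exists (fun j => hsurj (y j)).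
case: (Classical_Prop.classic (exists a b c, brL (brL a b) c != 0)) => [[a' [b' [c' h]]]|hnB].
  have [al' hal'] := hsurj a'; have [be' hbe'] := hsurj b'; have [ga' hga'] := hsurj c'.
  have hA := caseA hF hL hpi (lift_hx hpi hx0 hy) hM.
  apply: (hA (brF (brF al' be') ga')).
    by apply: brspan_br => //; apply: brspan_br.
  by rewrite !(pibr hpi) hal' hbe' hga'.
have hB : forall a b c : L, brL (brL a b) c = 0.
  move=> a1 b1 c1; apply/eqP; apply/negPn/negP => h3; apply: hnB; exists a1, b1, c1; exact: h3.
have [al hal] := hsurj a; have [ga hga] := hsurj c.
have [y' [hy' [p hp]]] := exch hy hac.
have [x1 hx1] := fin_all_exists (fun j => hsurj (y' j)).
pose x j := if j == p then brF al ga else x1 j.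
have hxy : forall j, pi (x j) = y' j.
  move=> j; rewrite /x; case: eqP => [->|_]; last exact: hx1.
  by rewrite hp (pibr hpi) hal hga.
have n2 : (1 < \dim (fullv : {vspace L}))%N.
  case: (ltnP 1 (\dim (fullv : {vspace L}))) => // hle.
  move: hac; have [ca ->] := hy a; have [cc ->] := hy c.
  rewrite (brsumL hL) big1 ?eqxx // => j _.
  rewrite (brsumR hL) big1 ?scaler0 // => k _.
  have -> : k = j by apply: val_inj => /=; move: (ltn_ord j) (ltn_ord k) hle; lia.
  by rewrite (brxx hL) scaler0.
apply: (caseB hF hL hpi (lift_hx hpi hxy hy') hM (p := p) (al := al) (ga := ga) _ hB n2).
by rewrite /x eqxx.
Qed.
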